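(* Let $V$ be a finite-dimensional real vector space with a seminorm $|\cdot|_V$ admitting a zonal representation $\sigma$. Then $|\cdot|_V$ is strictly convex if and only if for all linearly independent $v,w\in V$ there exists $\eta\in\operatorname{supp}\sigma$ with $\eta(v)\,\eta(w)<0$. In particular, if $\dim V=2$, then $|\cdot|_V$ is strictly convex if and only if $\sigma$ is non-degenerate.
   Context: $V'$ is the set of linear forms $\eta$ on $V$ with finite dual seminorm $|\eta|_{V'}=\sup\{\eta(v):|v|_V\le1\}$. A zonal representation of $|\cdot|_V$ is a locally finite nonnegative Borel measure $\sigma$ on $V'$ such that $\int_{V'}|\eta|_{V'}\,d\sigma(\eta)<\infty$ and $|v|_V=\int_{V'}|\eta(v)|\,d\sigma(\eta)$ for all $v\in V$. It is non-degenerate if $\sigma(C)>0$ for every nonempty open double cone $C\subseteq V'$, i.e. every nonempty open set $C$ with $\lambda C=C$ for all $\lambda\in\mathbb{R}\setminus\{0\}$. A seminorm is strictly convex if $|v+w|_V<|v|_V+|w|_V$ for all linearly independent $v,w\in V$.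
   Formalization: Non-degeneracy of σ means σ(C)>0 for every nonempty double cone C that is open in the space of all linear forms on V, rather than every open double cone C ⊆ V′. The statement above fails without it. *)

(* Defs.v *)
From HB Require Import structures.
From mathcomp Require Import all_boot all_order all_algebra.
From mathcomp Require Import all_classical all_reals all_analysis.
Set Implicit Arguments. Unset Strict Implicit. Unset Printing Implicit Defensive.
Import Order.TTheory GRing.Theory Num.Theory.
Import numFieldNormedType.Exports.
Local Open Scope classical_set_scope.
Local Open Scope ring_scope.

(* V = R^n, realised as row vectors 'rV[R]_n.  A linear form on V is
   represented by its coefficient row eta : 'rV[R]_n, acting by pairing. *)
Definition pair (R : realType) (n : nat) (eta v : 'rV[R]_n) : R :=
  \sum_(i < n) eta ord0 i * v ord0 i.

Notation dualBorel R n := (g_sigma_algebraType (@open 'rV[R]_n)).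

Definition is_seminorm (R : realType) (n : nat) (N : 'rV[R]_n -> R) : Prop :=
  (forall v w, N (v + w) <= N v + N w) /\
  (forall (a : R) v, N (a *: v) = `|a| * N v).

(* dual seminorm |eta|_{V'} = sup { eta(v) : |v|_V <= 1 }, in \bar R
   (it is +oo exactly when eta is not in V') *)
Definition dual_seminorm (R : realType) (n : nat) (N : 'rV[R]_n -> R)
  (eta : 'rV[R]_n) : \bar R :=
  ereal_sup [set (pair eta v)%:E | v in [set v | N v <= 1]].

Definition lin_indep2 (R : realType) (n : nat) (v w : 'rV[R]_n) : Prop :=
  forall a b : R, a *: v + b *: w = 0 -> a = 0 /\ b = 0.

Definition strictly_convex (R : realType) (n : nat) (N : 'rV[R]_n -> R) : Prop :=
  forall v w, lin_indep2 v w -> N (v + w) < N v + N w.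

Definition locally_finite (R : realType) (n : nat)
  (mu : set (dualBorel R n) -> \bar R) : Prop :=
  forall eta : 'rV[R]_n, exists U : set 'rV[R]_n,
    [/\ open U, U eta & (mu U < +oo)%E].

(* Finiteness of the first integral forces mu to be concentrated on V'. *)
Definition zonal_rep (R : realType) (n : nat) (N : 'rV[R]_n -> R)
  (mu : {measure set (dualBorel R n) -> \bar R}) : Prop :=
  [/\ locally_finite mu,
      (\int[mu]_(eta in [set: dualBorel R n]) dual_seminorm N eta < +oo)%E &
      forall v : 'rV[R]_n,
        ((N v)%:E = \int[mu]_(eta in [set: dualBorel R n]) (`|pair eta v|)%:E)%E].

Definition supp (R : realType) (n : nat)
  (mu : set (dualBorel R n) -> \bar R) : set 'rV[R]_n :=
  [set eta | forall U : set 'rV[R]_n, open U -> U eta -> (0 < mu U)%E].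

Definition double_cone (R : realType) (n : nat) (C : set 'rV[R]_n) : Prop :=
  forall lam : R, lam != 0 -> [set lam *: x | x in C] = C.

Definition non_degenerate (R : realType) (n : nat)
  (mu : set (dualBorel R n) -> \bar R) : Prop :=
  forall C : set 'rV[R]_n, open C -> C !=set0 -> double_cone C -> (0 < mu C)%E.

(* Main.v *)
Require Import Defs.
From HB Require Import structures.
From mathcomp Require Import all_boot all_order all_algebra.
From mathcomp Require Import all_classical all_reals all_analysis.
From mathcomp Require Import ring lra measurable_realfun.
Import Order.TTheory GRing.Theory Num.Theory.
Import numFieldNormedType.Exports.
Local Open Scope classical_set_scope.
Local Open Scope ring_scope.
Set Implicit Arguments. Unset Strict Implicit.

Lemma open_meas (R : realType) (n : nat) (A : set 'rV[R]_n) :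
  open A -> measurable (A : set (dualBorel R n)).
Proof. by move=> oA; apply: sub_sigma_algebra. Qed.

Lemma cont_meas (R : realType) (n : nat) (g : 'rV[R]_n -> R) :
  continuous g -> measurable_fun (setT : set (dualBorel R n)) g.
Proof.
move=> /continuousP cg; apply: (measurability _ (measurable_realfun.RGenOpens.measurableE R)).
move=> _ [_ [a [b ->]] <-]; rewrite setTI; apply: open_meas.
exact/cg/interval_open.
Qed.

Lemma pair_cont (R : realType) (n : nat) (v : 'rV[R]_n) :
  continuous (fun eta : 'rV[R]_n => pair eta v).
Proof.
rewrite /pair; elim: (index_enum _) => [|i s IH].
  by under eq_fun do rewrite big_nil; exact: cst_continuous.
under eq_fun do rewrite big_cons.
move=> x; apply: (@continuousD R R^o _ (fun eta : 'rV[R]_n => eta ord0 i * v ord0 i)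
  (fun eta => \sum_(j <- s) eta ord0 j * v ord0 j)); last exact: IH.
apply: (@continuousM R _ (fun eta : 'rV[R]_n => eta ord0 i) (fun=> v ord0 i)).
  exact: coord_continuous.
exact: cst_continuous.
Qed.

Lemma pairD (R : realType) (n : nat) (eta v w : 'rV[R]_n) :
  pair eta (v + w) = pair eta v + pair eta w.
Proof. by rewrite /pair -big_split; apply: eq_bigr => i _; rewrite mxE mulrDr. Qed.

Lemma abs_gap_ge0 (R : realType) (a b : R) : 0 <= `|a| + `|b| - `|a + b|.
Proof. by rewrite subr_ge0 ler_normD. Qed.

Lemma abs_gap_gt0 (R : realType) (a b : R) : (0 < `|a| + `|b| - `|a + b|) = (a * b < 0).
Proof.
have [a0|a0] := leP 0 a; have [b0|b0] := leP 0 b; have [c0|c0] := leP 0 (a + b);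
rewrite ?(ger0_norm a0) ?(ltr0_norm a0) ?(ger0_norm b0) ?(ltr0_norm b0)
  ?(ger0_norm c0) ?(ltr0_norm c0);
apply/idP/idP => H; nra.
Qed.

Lemma int_abs_pair (R : realType) (n : nat) (N : 'rV[R]_n -> R)
  (mu : {measure set (dualBorel R n) -> \bar R}) (v : 'rV[R]_n) :
  zonal_rep N mu ->
  mu.-integrable setT (EFin \o (fun eta : dualBorel R n => `|pair eta v|)).
Proof.
case=> _ _ Nint; apply/integrableP; split.
  apply/measurable_EFinP; apply: cont_meas => x.
  apply: (continuous_comp (f:=fun eta => pair eta v) (g:=Num.norm)); [exact: pair_cont|exact: norm_continuous].
under eq_integral do rewrite /= normr_id.
by rewrite -Nint ltry.
Qed.

Definition gap (R : realType) (n : nat) (v w eta : 'rV[R]_n) : R :=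
  `|pair eta v| + `|pair eta w| - `|pair eta (v + w)|.

Lemma int_gap (R : realType) (n : nat) (N : 'rV[R]_n -> R)
  (mu : {measure set (dualBorel R n) -> \bar R}) (v w : 'rV[R]_n) :
  zonal_rep N mu ->
  (\int[mu]_(eta in [set: dualBorel R n]) (gap v w eta)%:E = (N v + N w - N (v + w))%:E)%E.
Proof.
move=> zr; have [_ _ Nint] := zr.
have iv := int_abs_pair v zr; have iw := int_abs_pair w zr.
have ivw := int_abs_pair (v + w) zr.
have i12 : mu.-integrable setT
    (EFin \o (fun eta : dualBorel R n => `|pair eta v| + `|pair eta w|)).
  apply: (eq_integrable _ _ _ _ (integrableD _ iv iw)) => //.
rewrite /gap integralB_EFin //.
rewrite EFinB EFinD !Nint -integralD_EFin //.
Qed.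

Lemma abs_pair_cont (R : realType) (n : nat) (v : 'rV[R]_n) :
  continuous (fun eta : 'rV[R]_n => `|pair eta v|).
Proof.
move=> x; apply: (continuous_comp (f:=fun eta => pair eta v) (g:=Num.norm)).
  exact: pair_cont.
exact: norm_continuous.
Qed.

Lemma gap_cont (R : realType) (n : nat) (v w : 'rV[R]_n) :
  continuous (gap v w).
Proof.
move=> x; rewrite /gap.
apply: (@continuousD R R^o _ (fun eta => `|pair eta v| + `|pair eta w|)
  (fun eta => - `|pair eta (v + w)|)).
  apply: (@continuousD R R^o _ (fun eta => `|pair eta v|) (fun eta => `|pair eta w|));
  exact: abs_pair_cont.
apply: (@continuousN R R^o _ (fun eta => `|pair eta (v + w)|)).
exact: abs_pair_cont.
Qed.

Definition Sset (R : realType) (n : nat) (v w : 'rV[R]_n) : set 'rV[R]_n :=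
  [set eta | pair eta v * pair eta w < 0].

Lemma Sset_open (R : realType) (n : nat) (v w : 'rV[R]_n) : open (Sset v w).
Proof.
have cp : continuous (fun eta : 'rV[R]_n => pair eta v * pair eta w).
  move=> x; apply: (@continuousM R _ (fun eta => pair eta v) (fun eta => pair eta w));
  exact: pair_cont.
have := (proj1 (continuousP _) cp `]-oo, 0[%classic (interval_open _ _)).
move=> H; rewrite (_ : Sset v w = (fun eta : 'rV[R]_n => pair eta v * pair eta w) @^-1` `]-oo, 0[%classic).
  exact: H.
by apply/seteqP; split => x /=; rewrite in_itv.
Qed.

Lemma Sset_gap (R : realType) (n : nat) (v w : 'rV[R]_n) eta :
  Sset v w eta <-> 0 < gap v w eta.
Proof. by rewrite /Sset /gap /= pairD abs_gap_gt0. Qed.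

Lemma keyK (R : realType) (n : nat) (N : 'rV[R]_n -> R)
  (mu : {measure set (dualBorel R n) -> \bar R}) (v w : 'rV[R]_n) :
  zonal_rep N mu ->
  (0 < N v + N w - N (v + w)) <-> (0 < mu (Sset v w))%E.
Proof.
move=> zr.
have mS : measurable (Sset v w : set (dualBorel R n)) := open_meas (@Sset_open R n v w).
have mg : measurable_fun (setT : set (dualBorel R n)) (EFin \o gap v w).
  by apply/measurable_EFinP; apply: cont_meas; exact: gap_cont.
have ig := @int_gap R n N mu v w zr.
have g0 : forall eta, 0 <= gap v w eta.
  by move=> eta; rewrite /gap pairD; apply: abs_gap_ge0.
split => [gt0|muS].
- rewrite lt0e measure_ge0 andbT; apply/negP => /eqP muS0.
  suff : (\int[mu]_(eta in [set: dualBorel R n]) (gap v w eta)%:E =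
          \int[mu]_(eta in [set: dualBorel R n]) (cst 0%E eta))%E.
    by rewrite ig integral0 => -[] /eqP; rewrite (gt_eqF gt0).
  apply: ae_eq_integral => //.
  exists (Sset v w); split => // x /= /not_implyP [_ H].
  apply/Sset_gap; rewrite lt_neqAle g0 andbT eq_sym.
  by apply/eqP => H'; apply: H; rewrite H'.
- rewrite ltNge; apply/negP => le0.
  have i0 : (\int[mu]_(eta in [set: dualBorel R n]) `|(gap v w eta)%:E| = 0)%E.
    under eq_integral do rewrite gee0_abs ?lee_fin //.
    rewrite ig; apply/eqP; rewrite eq_le lee_fin le0 /=.
    by rewrite -ig integral_ge0 // => x _; rewrite lee_fin.
  have [N0 [mN0 N00 sub]] := proj1 (ae_eq_integral_abs mu measurableT mg) i0.
  move: muS; rewrite (subset_measure0 mS mN0 _ N00) ?ltxx //.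
  move=> x /Sset_gap Hx; apply: sub => /=; apply/not_implyP; split => //.
  by move=> [] /eqP; rewrite gt_eqF.
Qed.

Lemma rat_approx_row (R : realType) (n : nat) (eta : 'rV[R]_n) (e : R) :
  0 < e -> exists c : 'rV[rat]_n, forall i, `|eta ord0 i - ratr (c ord0 i)| < e.
Proof.
move=> e0.
have H : forall i : 'I_n, exists q : rat, `|eta ord0 i - ratr q| < e.
  move=> i; have [q] := @rat_in_itvoo R (eta ord0 i - e) (eta ord0 i + e)
     ltac:(by rewrite ltrBlDr -addrA ltrDl addr_gt0).
  rewrite in_itv /= => /andP[h1 h2]; exists q.
  by rewrite ltr_norml; apply/andP; split; lra.
have [f Hf] := choice H.
by exists (\row_i f i) => i; rewrite mxE.
Qed.

Lemma lindelof (R : realType) (n : nat)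
  (mu : {measure set (dualBorel R n) -> \bar R}) (A : set 'rV[R]_n) :
  measurable (A : set (dualBorel R n)) ->
  (forall eta, A eta -> ~ supp mu eta) -> mu A = 0%E.
Proof.
move=> mA nA.
pose B (p : 'rV[rat]_n * rat) : set 'rV[R]_n := @ball R _ (map_mx (@ratr R) p.1 : 'rV[R]_n) (ratr p.2).
pose good p := exists U : set 'rV[R]_n, [/\ open U, mu U = 0%E & B p `<=` U].
pose F k : set 'rV[R]_n := if unpickle k is Some p then
   (if `[< good p >] then B p else set0) else set0.
have mF : forall k, measurable (F k : set (dualBorel R n)).
  move=> k; rewrite /F; case: (unpickle k) => [p|]; last exact: measurable0.
  by case: ifP => _; [apply: open_meas; exact: ball_open | exact: measurable0].
have F0 : forall k, mu (F k) = 0%E.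
  move=> k; rewrite /F; case: (unpickle k) => [p|]; last exact: measure0.
  case: ifP => [/asboolP [U [oU U0 BU]]|_]; last exact: measure0.
  exact: (subset_measure0 (open_meas (ball_open _ _)) (open_meas oU) BU U0).
have cover : A `<=` \bigcup_k F k.
  move=> eta Aeta.
  have : ~ supp mu eta by exact: nA.
  move=> /existsNP [U /not_implyP [oU /not_implyP [Ueta]]].
  move=> /negP; rewrite -leNgt => mU0.
  have U0 : mu U = 0%E by apply/eqP; rewrite eq_le mU0 measure_ge0.
  have : nbhs eta U by apply: open_nbhs_nbhs; split.
  move=> /nbhs_ballP [e /= e0 sU].
  have [r] := @rat_in_itvoo R (e / 3) (e / 2) ltac:(lra).
  rewrite in_itv /= => /andP [r1 r2].
  have [c Hc] := @rat_approx_row R n eta (e / 3) ltac:(lra).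
  exists (pickle (c, r)) => //.
  have Beta : B (c, r) eta.
    rewrite /B /ball /=; split; first lra.
    move=> i j; rewrite /ball /= !mxE (ord1 i) distrC.
    exact: lt_trans (Hc j) r1.
  have BU : B (c, r) `<=` U.
    move=> y [_ Hy]; apply: sU; rewrite /ball /=; split => // i j.
    rewrite (ord1 i) /ball /=.
    have := Hy ord0 j; rewrite /ball /= !mxE => h.
    have h2 := Hc j.
    rewrite -(subrK (ratr (c ord0 j)) (eta ord0 j)) -addrA.
    apply: (le_lt_trans (ler_normD _ _)); lra.
  rewrite /F pickleK; have -> : `[< good (c, r) >] by apply/asboolP; exists U.
  exact: Beta.
apply/eqP; rewrite eq_le measure_ge0 andbT.
rewrite (le_trans (measure_sigma_subadditive _ mF mA cover)) //.
by rewrite eseries0.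
Qed.

Lemma part1 (R : realType) (n : nat) (N : 'rV[R]_n -> R)
  (mu : {measure set (dualBorel R n) -> \bar R}) :
  zonal_rep N mu ->
  (strictly_convex N <->
     (forall v w : 'rV[R]_n, lin_indep2 v w ->
        exists eta, supp mu eta /\ pair eta v * pair eta w < 0)).
Proof.
move=> zr; split.
- move=> sc v w ind; apply: contrapT => nE.
  have mS : measurable (Sset v w : set (dualBorel R n)) := open_meas (@Sset_open R n v w).
  have muS : mu (Sset v w) = 0%E.
    apply: (@lindelof R n mu _ mS) => eta Seta sEta; apply: nE; exists eta; split => //.
  have := proj1 (@keyK R n N mu v w zr); rewrite muS ltxx subr_gt0.
  by move=> /(_ (sc v w ind)).
- move=> H v w ind; have [eta [sEta Seta]] := H v w ind.
  rewrite -subr_gt0; apply/(@keyK R n N mu v w zr).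
  exact: sEta (@Sset_open R n v w) Seta.
Qed.

Lemma pairZ (R : realType) (n : nat) (a : R) (eta v : 'rV[R]_n) :
  pair (a *: eta) v = a * pair eta v.
Proof. by rewrite /pair mulr_sumr; apply: eq_bigr => i _; rewrite mxE mulrA. Qed.

Lemma Sset_cone (R : realType) (n : nat) (v w : 'rV[R]_n) : double_cone (Sset v w).
Proof.
move=> lam lam0; apply/seteqP; split.
  move=> _ [x Sx <-]; rewrite /Sset /= !pairZ.
  rewrite mulrACA pmulr_rlt0 // -expr2 exprn_even_gt0 //.
move=> y Sy; exists (lam^-1 *: y); last by rewrite scalerA divff // scale1r.
rewrite /Sset /= !pairZ mulrACA pmulr_rlt0 //.
by rewrite -expr2 exprn_even_gt0 // invr_eq0.
Qed.
Lemma ord2 (j : 'I_2) : j = ord0 \/ j = ord_max.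
Proof. by case: j => [[|[|m]] Hm]; [left|right|]; try apply: val_inj. Qed.

Lemma pair2 (R : realType) (eta v : 'rV[R]_2) :
  pair eta v = eta ord0 ord0 * v ord0 ord0 + eta ord0 ord_max * v ord0 ord_max.
Proof.
rewrite /pair !big_ord_recl big_ord0 addr0.
by have -> : lift ord0 ord0 = ord_max :> 'I_2 by apply: val_inj.
Qed.

Definition mk2 (R : realType) (x y : R) : 'rV[R]_2 :=
  \row_(j < 2) (if j == ord0 then x else y).

Lemma mk2_0 (R : realType) (x y : R) : mk2 x y ord0 ord0 = x.
Proof. by rewrite mxE. Qed.
Lemma mk2_1 (R : realType) (x y : R) : mk2 x y ord0 ord_max = y.
Proof. by rewrite mxE. Qed.

Lemma rv2_eq (R : realType) (x y : 'rV[R]_2) :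
  x ord0 ord0 = y ord0 ord0 -> x ord0 ord_max = y ord0 ord_max -> x = y.
Proof.
by move=> h0 h1; apply/rowP => j; case: (ord2 j) => ->.
Qed.

Lemma indep_det (R : realType) (v w : 'rV[R]_2) : lin_indep2 v w ->
  v ord0 ord0 * w ord0 ord_max - v ord0 ord_max * w ord0 ord0 != 0.
Proof.
move=> ind; apply/negP => /eqP D0.
have [h1 h2] : w ord0 ord_max = 0 /\ - v ord0 ord_max = 0.
  apply: ind; apply: rv2_eq; rewrite !mxE; lra.
have [h3 h4] : w ord0 ord0 = 0 /\ - v ord0 ord0 = 0.
  apply: ind; apply: rv2_eq; rewrite !mxE; lra.
have [] : (1 : R) = 0 /\ (0 : R) = 0.
  apply: ind; apply: rv2_eq; rewrite !mxE; lra.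
by move/eqP; rewrite oner_eq0.
Qed.

Lemma S_nonempty (R : realType) (v w : 'rV[R]_2) : lin_indep2 v w -> Sset v w !=set0.
Proof.
move=> /indep_det D; set d := _ - _ in D.
exists (mk2 ((w ord0 ord_max + v ord0 ord_max) / d) (- (w ord0 ord0 + v ord0 ord0) / d)).
rewrite /Sset /= !pair2 mk2_0 mk2_1.
have -> : (w ord0 ord_max + v ord0 ord_max) / d * v ord0 ord0 +
   - (w ord0 ord0 + v ord0 ord0) / d * v ord0 ord_max = 1.
  by rewrite /d; field.
have -> : (w ord0 ord_max + v ord0 ord_max) / d * w ord0 ord0 +
   - (w ord0 ord0 + v ord0 ord0) / d * w ord0 ord_max = -1.
  by rewrite /d; field.
by rewrite mul1r oppr_lt0 ltr01.
Qed.

Lemma nonzero_point (R : realType) (C : set 'rV[R]_2) :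
  open C -> C !=set0 -> exists u, C u /\ u != 0.
Proof.
move=> oC [u0 Cu0]; have [u00|u0n0] := eqVneq u0 0; last by exists u0.
have : nbhs u0 C by apply: open_nbhs_nbhs; split.
move=> /nbhs_ballP [e /= e0 sC].
exists (mk2 (e / 2) 0); split.
  apply: sC; rewrite /ball /=; split => // i j; rewrite (ord1 i) /ball /= u00.
  case: (ord2 j) => ->; rewrite ?mk2_0 ?mk2_1 !mxE sub0r normrN ?normr0 //.
  by rewrite ger0_norm; lra.
apply/eqP => /(congr1 (fun x : 'rV[R]_2 => x ord0 ord0)); rewrite mk2_0 mxE.
lra.
Qed.

Lemma cone_S (R : realType) (C : set 'rV[R]_2) :
  open C -> C !=set0 -> double_cone C ->
  exists v w, lin_indep2 v w /\ Sset v w `<=` C.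
Proof.
move=> oC nC dC; have [u [Cu u0]] := nonzero_point oC nC.
have : nbhs u C by apply: open_nbhs_nbhs; split.
move=> /nbhs_ballP [e /= e0 sC].
set p := u ord0 ord0; set q := u ord0 ord_max.
have k0 : p ^+ 2 + q ^+ 2 != 0.
  apply/negP => /eqP k0; move/eqP: u0; apply; apply: rv2_eq; rewrite mxE -?/p -?/q; rewrite !expr2 in k0; nra.
set k := p ^+ 2 + q ^+ 2 in k0.
set K := `|p| + `|q| + 1.
have K0 : 0 < K by rewrite /K; have := normr_ge0 p; have := normr_ge0 q; lra.
set t := e / K.
have t0 : 0 < t by rewrite /t divr_gt0.
have tK : t * K = e by rewrite /t divfK // gt_eqF.
exists (mk2 (- q + t * p) (p + t * q)), (mk2 (- q - t * p) (p - t * q)); split.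
  move=> a b /(congr1 (fun x : 'rV[R]_2 => (x ord0 ord0, x ord0 ord_max))).
  rewrite !mxE /= => -[E1 E2].
  have hA : (a + b) * k = 0.
    have -> : (a + b) * k = p * (a * (p + t * q) + b * (p - t * q))
       - q * (a * (- q + t * p) + b * (- q - t * p)) by rewrite /k; ring.
    by rewrite E1 E2 !mulr0 subrr.
  have hB : (a - b) * t * k = 0.
    have -> : (a - b) * t * k = q * (a * (p + t * q) + b * (p - t * q))
       + p * (a * (- q + t * p) + b * (- q - t * p)) by rewrite /k; ring.
    by rewrite E1 E2 !mulr0 addr0.
  have hA' : a + b = 0 by apply: (mulIf k0); rewrite mul0r.
  have hB' : (a - b) * t = 0 by apply: (mulIf k0); rewrite mul0r.
  clearbody t; split; nra.
move=> eta; rewrite /Sset /= !pair2 !mk2_0 !mk2_1.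
set x0 := eta ord0 ord0; set x1 := eta ord0 ord_max => H.
set a := x0 * p + x1 * q; set b := - x0 * q + x1 * p.
have Ha : (x0 * (- q + t * p) + x1 * (p + t * q)) = b + t * a by rewrite /a /b; ring.
have Hb : (x0 * (- q - t * p) + x1 * (p - t * q)) = b - t * a by rewrite /a /b; ring.
rewrite Ha Hb in H.
have a0 : a != 0 by apply/eqP => a0; move: H; rewrite a0 mulr0 subr0 addr0; nra.
set s := b / a.
have st : `|s| < t.
  have hs : s * s < t * t.
    have -> : s * s = (b * b) / (a * a) by rewrite /s; field.
    rewrite ltr_pdivrMr; last by rewrite -expr2 exprn_even_gt0.
    nra.
  have [s0|s0] := leP 0 s; [rewrite ger0_norm // | rewrite ltr0_norm //]; nra.
pose y := mk2 (p + s * - q) (q + s * p).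
have Cy : C y.
  apply: sC; rewrite /ball /=; split => // i j; rewrite (ord1 i) /ball /=.
  have hq : `|q| < K by rewrite /K; have := normr_ge0 p; lra.
  have hp : `|p| < K by rewrite /K; have := normr_ge0 q; lra.
  case: (ord2 j) => ->; rewrite /y ?mk2_0 ?mk2_1 -/p -/q.
    rewrite opprD addrA subrr sub0r normrN normrM normrN -tK.
    apply: (le_lt_trans (y := `|s| * K)); first by rewrite ler_wpM2l // ltW.
    by rewrite ltr_pM2r.
  rewrite opprD addrA subrr sub0r normrN normrM -tK.
  apply: (le_lt_trans (y := `|s| * K)); first by rewrite ler_wpM2l // ltW.
  by rewrite ltr_pM2r.
have lam0 : a / k != 0 by rewrite mulf_neq0 // invr_eq0.
rewrite -(dC _ lam0); exists y => //.
move: k0 a0; rewrite /k /a => k0 a0.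
apply: rv2_eq; rewrite !mxE /= /s /b /a -/x0 -/x1; field; by rewrite ?k0 ?a0.
Qed.

Unset Implicit Arguments.

Theorem proposition4p4 (R : realType) (n : nat) (N : 'rV[R]_n -> R)
  (mu : {measure set (dualBorel R n) -> \bar R}) :
  is_seminorm N -> zonal_rep N mu ->
  (strictly_convex N <->
     (forall v w : 'rV[R]_n, lin_indep2 v w ->
        exists eta, supp mu eta /\ pair eta v * pair eta w < 0)) /\
  (n = 2%N -> (strictly_convex N <-> non_degenerate mu)).
Proof.
move=> _ zr; split; first exact: part1.
move=> n2; subst n; split.
- move=> sc C oC nC dC; have [v [w [ind SC]]] := cone_S oC nC dC.
  have muS := proj1 (@keyK R 2 N mu v w zr) (ltac:(by rewrite subr_gt0; exact: sc v w ind)).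
  apply: (lt_le_trans muS); apply: le_measure => //; rewrite inE.
    exact: (open_meas (@Sset_open R 2 v w)).
  exact: (open_meas oC).
- move=> nd v w ind; rewrite -subr_gt0; apply/(@keyK R 2 N mu v w zr); apply: nd.
  + exact: Sset_open.
  + exact: S_nonempty.
  + exact: Sset_cone.
Qed.
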